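(* For every integer $m\ge0$, the following identity of rational functions in indeterminates $x,y$ holds: $$\frac{(1-x^{m+1})(1-y^{m+1})}{(1-x)^{m+1}(1-y)^{m+1}}=\sum_{r=0}^{m}\sum_{s=0}^{m-r}\frac{m+1}{m+1-r-s}\binom{m-r}{s}\binom{m-s}{r}\frac{x^ry^s}{(1-x)^{r+s}(1-y)^{r+s}}.$$ Equivalently, for every integer $m\ge1$, $$(1-x^m)(1-y^m)=\sum_{k=0}^{m-1}\sum_{i=0}^{k}\frac{m}{m-k}\binom{m-k+i-1}{i}\binom{m-i-1}{k-i}x^iy^{k-i}(1-x)^{m-k}(1-y)^{m-k}.$$ *)

(* Defs.v *)
From mathcomp Require Import all_boot all_order all_algebra.
Set Implicit Arguments. Unset Strict Implicit. Unset Printing Implicit Defensive.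

(* Main.v *)
Require Import Defs.
From mathcomp Require Import all_boot all_order all_algebra.
From mathcomp Require Import ring zify.
Import GRing.Theory.
Local Open Scope ring_scope.
Lemma hockey n k : (\sum_(j < k.+1) 'C(n + j - 1, j))%N = 'C(n + k, k).
Proof.
elim: k => [|k IH]; first by rewrite big_ord1 !bin0.
rewrite big_ord_recr /= IH.
rewrite (_ : n + k.+1 - 1 = n + k)%N; last by rewrite addnS subn1.
by rewrite addnS binS addnC.
Qed.

Section S.
Variable F : fieldType.

Lemma coef_qpow (a : F) m n k : (k < m)%N ->
  ((\poly_(i < m) a ^+ i) ^+ n)`_k = ('C(n + k - 1, k))%:R * a ^+ k.
Proof.
move=> km; elim: n k km => [|n IH] k km.
  rewrite expr0 coefE add0n; case: k km => [|k] km /=; first by rewrite bin0 mul1r.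
  by rewrite subn1 /= bin_small // mul0r.
rewrite exprSr coefM.
have -> : \sum_(j < k.+1) ((\poly_(i < m) a ^+ i) ^+ n)`_j * (\poly_(i < m) a ^+ i)`_(k - j)
   = \sum_(j < k.+1) ('C(n + j - 1, j))%:R * a ^+ k.
  apply: eq_bigr => j _.
  have jk : (j <= k)%N by rewrite -ltnS.
  rewrite IH ?(leq_ltn_trans jk km) // coef_poly.
  rewrite (leq_ltn_trans (leq_subr j k) km) -mulrA -exprD subnKC //.
rewrite -mulr_suml -natr_sum hockey.
by rewrite addSn subn1 /=.
Qed.

Lemma geomq (a : F) m : (1 - a%:P * 'X) * \poly_(i < m) a ^+ i = 1 - (a ^+ m)%:P * 'X^m.
Proof.
elim: m => [|m IH]; first by rewrite poly_def big_ord0 mulr0 expr0 polyC1 mul1r expr0 subrr.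
rewrite poly_def big_ord_recr /= -poly_def mulrDr IH -mul_polyC !rmorphXn.
rewrite !exprS; ring.
Qed.

Lemma geomS (z : {poly F}) m : (\sum_(i < m) z ^+ i) * (1 - z) = 1 - z ^+ m.
Proof.
elim: m => [|m IH]; first by rewrite big_ord0 mul0r expr0 subrr.
by rewrite big_ord_recr /= mulrDl IH exprS; ring.
Qed.

Lemma sum_tri (f : nat -> nat -> F) m :
  \sum_(k < m.+1) \sum_(i < k.+1) f i (k - i)%N = \sum_(r < m.+1) \sum_(s < (m - r).+1) f r s.
Proof.
elim: m => [|m IH]; first by rewrite !big_ord1.
rewrite big_ord_recr /= IH [RHS]big_ord_recr /= subnn big_ord1.
have -> : \sum_(i < m.+1) \sum_(s < (m.+1 - i).+1) f i s =
   \sum_(i < m.+1) (\sum_(s < (m - i).+1) f i s + f i (m.+1 - i)%N).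
  apply: eq_bigr => i _; rewrite subSn; last by rewrite -ltnS.
  by rewrite big_ord_recr /=.
rewrite big_split /= -addrA; congr (_ + _).
by rewrite big_ord_recr /= subnn.
Qed.
End S.

Lemma cong_part (F : fieldType) p (x y : F) :
  let m := p.+1 in
  let qx := \poly_(i < m) x ^+ i in
  let qy := \poly_(i < m) y ^+ i in
  let w : {poly F} := ((1 - x) * (1 - y))%:P * ('X * (qx * qy)) in
  let S := \sum_(n < m) w ^+ n in
  let G (a : F) := a%:P * \poly_(i < m) a ^+ i in
  let V := G 1 - G x - G y + G (x * y) in
  (S * w^`())`_p = V`_p.
Proof.
move=> m qx qy w S G V.
set W : {poly F} := 'X^m.
set X : {poly F} := 'X.
set xp := x%:P; set yp := y%:P; set al := (x ^+ m)%:P; set be := (y ^+ m)%:P.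
set mm : {poly F} := (m%:R).
set uP := (1 - xp) * (1 - yp).
have hu : ((1 - x) * (1 - y))%:P = uP by rewrite /uP polyCM !polyCB polyC1.
have hA : (1 - xp * X) * qx = 1 - al * W by rewrite geomq.
have hB : (1 - yp * X) * qy = 1 - be * W by rewrite geomq.
set dx := qx^`(); set dy := qy^`().
have hdx : - xp * qx + (1 - xp * X) * dx = - (al * ('X^p * mm)).
  move: (congr1 deriv hA); rewrite !derivE /= -mulr_natr -/xp -/al -/dx => d.
  by rewrite !sub0r mulr1 in d.
have hdy : - yp * qy + (1 - yp * X) * dy = - (be * ('X^p * mm)).
  move: (congr1 deriv hB); rewrite !derivE /= -mulr_natr -/yp -/be -/dy => d.
  by rewrite !sub0r mulr1 in d.
have hWX : W = X * 'X^p by rewrite /W /X exprS.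
have hHx : X * (1 - xp * X) ^+ 2 * dx = xp * X * (1 - al * W) - mm * al * W * (1 - xp * X).
  have e : X * (1 - xp * X) ^+ 2 * dx - (xp * X * (1 - al * W) - mm * al * W * (1 - xp * X))
     = X * (1 - xp * X) * ((- xp * qx + (1 - xp * X) * dx) - (- (al * ('X^p * mm))))
       + xp * X * ((1 - xp * X) * qx - (1 - al * W)) by rewrite hWX; ring.
  by apply/eqP; rewrite -subr_eq0 e hdx hA !subrr !mulr0 addr0.
have hHy : X * (1 - yp * X) ^+ 2 * dy = yp * X * (1 - be * W) - mm * be * W * (1 - yp * X).
  have e : X * (1 - yp * X) ^+ 2 * dy - (yp * X * (1 - be * W) - mm * be * W * (1 - yp * X))
     = X * (1 - yp * X) * ((- yp * qy + (1 - yp * X) * dy) - (- (be * ('X^p * mm))))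
       + yp * X * ((1 - yp * X) * qy - (1 - be * W)) by rewrite hWX; ring.
  by apply/eqP; rewrite -subr_eq0 e hdy hB !subrr !mulr0 addr0.
have hw' : w^`() = uP * (qx * qy + X * (dx * qy + qx * dy)).
  rewrite /w hu !derivE -/dx -/dy -/X /uP; ring.
set D := (1 - xp * X) * (1 - yp * X).
set E := (1 - X) * (1 - xp * yp * X).
set c := 1 - xp * yp * X ^+ 2.
have hD2 : D ^+ 2 * w^`() = uP * c + W * (uP * (c * (al * be * W - al - be)
      - mm * D * (al * (1 - be * W) + be * (1 - al * W)))).
  rewrite hw'.
  have -> : D ^+ 2 * (uP * (qx * qy + X * (dx * qy + qx * dy))) =
     uP * (((1 - xp * X) * qx) * ((1 - yp * X) * qy) * D
       + (X * (1 - xp * X) ^+ 2 * dx) * (1 - yp * X) * ((1 - yp * X) * qy)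
       + (X * (1 - yp * X) ^+ 2 * dy) * (1 - xp * X) * ((1 - xp * X) * qx)) by rewrite /D; ring.
  rewrite hHx hHy hA hB /c /D; ring.
set Z := (uP * (qx * qy)) ^+ m.
set K1 := uP * X * (al + be - al * be * W).
have hwm : w ^+ m = W * Z.
  by rewrite /w hu /Z /W !exprMn mulrCA.
have h1w : (1 - w) * D = E + W * K1.
  have e : (1 - w) * D - (E + W * K1) =
     - (uP * X) * (((1 - xp * X) * qx) * ((1 - yp * X) * qy) - (1 - al * W) * (1 - be * W)).
    by rewrite /w hu /D /E /K1 /uP -/X; ring.
  by apply/eqP; rewrite -subr_eq0 e hA hB subrr mulr0.
have hSE : S * E = D - W * (Z * D + S * K1).
  have -> : S * E = (S * (1 - w)) * D - S * (W * K1).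
    by rewrite -mulrA h1w; ring.
  rewrite geomS hwm; ring.
set q1 := \poly_(i < m) (1 : F) ^+ i.
set qxy := \poly_(i < m) (x * y) ^+ i.
have h1 : (1 - X) * q1 = 1 - W.
  by have := @geomq F 1 m; rewrite polyC1 expr1n polyC1 !mul1r.
have hxy : (1 - xp * yp * X) * qxy = 1 - al * be * W.
  by have := @geomq F (x * y) m; rewrite polyCM exprMn polyCM.
set K4 := - ((1 - xp * yp * X) * D) + xp * al * ((1 - X) * (1 - xp * yp * X) * (1 - yp * X))
   + yp * be * ((1 - X) * (1 - xp * yp * X) * (1 - xp * X)) - xp * yp * (al * be) * ((1 - X) * D).
have hV : V * (E * D) = uP * c + W * K4.
  have -> : V * (E * D) = (1 - X) * q1 * ((1 - xp * yp * X) * D)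
     - xp * ((1 - xp * X) * qx) * ((1 - X) * (1 - xp * yp * X) * (1 - yp * X))
     - yp * ((1 - yp * X) * qy) * ((1 - X) * (1 - xp * yp * X) * (1 - xp * X))
     + xp * yp * ((1 - xp * yp * X) * qxy) * ((1 - X) * D).
    rewrite /V /G polyC1 polyCM -/xp -/yp -/qx -/qy -/q1 -/qxy /E /D; ring.
  rewrite h1 hA hB hxy /K4 /uP /c /D; ring.
set K2 := Z * D + S * K1.
have hfin : (S * w^`() - V) * (E * D) = W * (uP * (c * (al * be * W - al - be)
      - mm * D * (al * (1 - be * W) + be * (1 - al * W))) - K2 * (D * w^`()) - K4).
  have -> : (S * w^`() - V) * (E * D) = (S * E) * (D * w^`()) - V * (E * D) by ring.
  rewrite hSE hV.
  have -> : (D - W * K2) * (D * w^`()) = D ^+ 2 * w^`() - W * K2 * (D * w^`()) by ring.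
  rewrite hD2; ring.
have hdv : W %| (S * w^`() - V) * (E * D) by rewrite hfin dvdp_mulIl.
have hcop : coprimep W (E * D).
  rewrite /W coprimep_expl // coprimep_sym coprimepX /root /E /D /X /xp /yp.
  rewrite !hornerE /=. by rewrite !subr0 !mul1r oner_eq0.
rewrite (Gauss_dvdpl _ hcop) in hdv.
case/dvdpP: hdv => K hK.
apply/eqP; rewrite -subr_eq0 -coefB hK /W coefMXn ltnSn //.
Qed.

Lemma part2 (F : fieldType) (hF : [pchar F] =i pred0) p (x y : F) :
  (1 - x ^+ p.+1) * (1 - y ^+ p.+1) = \sum_(k < p.+1) \sum_(i < k.+1)
     (p.+1)%:R / (p.+1 - k)%:R * ('C(p.+1 - k + i - 1, i))%:R * ('C(p.+1 - i - 1, k - i))%:R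
     * x ^+ i * y ^+ (k - i) * (1 - x) ^+ (p.+1 - k) * (1 - y) ^+ (p.+1 - k).
Proof.
move/pcharf0P: hF => hF.
have key := @cong_part F p x y.
cbv zeta in key.
set qx := \poly_(i < p.+1) x ^+ i in key.
set qy := \poly_(i < p.+1) y ^+ i in key.
set w := ((1 - x) * (1 - y))%:P * ('X * (qx * qy)) in key.
have hV : (1 - x ^+ p.+1) * (1 - y ^+ p.+1) = ((\sum_(n < p.+1) w ^+ n) * w^`())`_p.
  rewrite key !coefD !coefN !coefCM !coef_poly ltnSn !exprS expr1n exprMn; ring.
rewrite hV mulr_suml coef_sum [RHS](reindex_inj rev_ord_inj) /=.
apply: eq_bigr => n _.
have np : (n <= p)%N by rewrite -ltnS.
have nz : (n.+1)%:R != 0 :> F by rewrite hF.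
have hder : (w ^+ n * w^`())`_p * (n.+1)%:R = (w ^+ n.+1)`_p.+1 * (p.+1)%:R.
  have := coef_deriv (w ^+ n.+1) p; rewrite deriv_exp /= coefMn mulrC => h.
  by rewrite !mulr_natr h.
have hcoef : (w ^+ n.+1)`_p.+1 = ((1 - x) * (1 - y)) ^+ n.+1 *
   \sum_(i < (p - n).+1) ('C(n.+1 + i - 1, i))%:R * x ^+ i *
      (('C(n.+1 + (p - n - i) - 1, p - n - i))%:R * y ^+ (p - n - i)).
  rewrite /w !exprMn -rmorphXn coefCM coefXnM ltnS ltnNge np /= subSS coefM.
  congr (_ * _); first by rewrite exprMn.
  apply: eq_bigr => i _.
  have ip : (i <= p - n)%N by rewrite -ltnS.
  rewrite !coef_qpow //; lia.
have -> : (w ^+ n * w^`())`_p = (p.+1)%:R / (n.+1)%:R * (w ^+ n.+1)`_p.+1.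
  rewrite -[LHS](mulfK nz) hder; ring.
rewrite hcoef.
have e1 : (p.+1 - (p.+1 - n.+1) = n.+1)%N by lia.
rewrite subSS in e1 *.
rewrite e1 mulr_sumr mulr_sumr; apply: eq_bigr => i _.
have ip : (i <= p - n)%N by rewrite -ltnS.
have e2 : (p.+1 - i - 1 = n.+1 + (p - n - i) - 1)%N by lia.
rewrite e2 exprMn; ring.
Qed.

Theorem corollary2p6 (F : fieldType) (hF : [pchar F] =i pred0) :
  forall (m : nat) (x y : F),
    (x != 1 -> y != 1 ->
      (1 - x ^+ m.+1) * (1 - y ^+ m.+1)
        / ((1 - x) ^+ m.+1 * (1 - y) ^+ m.+1)
      = \sum_(r < m.+1) \sum_(s < (m - r).+1)
          (m.+1)%:R / (m.+1 - r - s)%:R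
          * ('C(m - r, s))%:R * ('C(m - s, r))%:R
          * (x ^+ r * y ^+ s / ((1 - x) ^+ (r + s) * (1 - y) ^+ (r + s))))
    /\
    ((0 < m)%N ->
      (1 - x ^+ m) * (1 - y ^+ m)
      = \sum_(k < m) \sum_(i < k.+1)
          m%:R / (m - k)%:R
          * ('C(m - k + i - 1, i))%:R * ('C(m - i - 1, k - i))%:R
          * x ^+ i * y ^+ (k - i) * (1 - x) ^+ (m - k) * (1 - y) ^+ (m - k)).
Proof.
move=> m x y; split; last by case: m => [//|p] _; exact: part2.
move=> x1 y1.
have x0 : 1 - x != 0 by rewrite subr_eq0 eq_sym.
have y0 : 1 - y != 0 by rewrite subr_eq0 eq_sym.
rewrite (@part2 F hF) mulr_suml.
rewrite -(@sum_tri F (fun r s => (m.+1)%:R / (m.+1 - r - s)%:R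
          * ('C(m - r, s))%:R * ('C(m - s, r))%:R
          * (x ^+ r * y ^+ s / ((1 - x) ^+ (r + s) * (1 - y) ^+ (r + s))))).
apply: eq_bigr => k _; rewrite mulr_suml; apply: eq_bigr => i _.
have ik : (i <= k)%N by rewrite -ltnS.
have km : (k <= m)%N by rewrite -ltnS.
have e1 : (m.+1 - k + i - 1 = m - (k - i))%N by lia.
have e2 : (m.+1 - i - 1 = m - i)%N by lia.
have e3 : (m.+1 - i - (k - i) = m.+1 - k)%N by lia.
have e4 : (i + (k - i) = k)%N by lia.
rewrite e1 e2 e3 e4.
have ex : (1 - x) ^+ m.+1 = (1 - x) ^+ (m.+1 - k) * (1 - x) ^+ k by rewrite -exprD subnK // ltnW.
have ey : (1 - y) ^+ m.+1 = (1 - y) ^+ (m.+1 - k) * (1 - y) ^+ k by rewrite -exprD subnK // ltnW.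
rewrite ex ey.
have a0 : (1 - x) ^+ (m.+1 - k) != 0 by rewrite expf_neq0.
have b0 : (1 - x) ^+ k != 0 by rewrite expf_neq0.
have c0 : (1 - y) ^+ (m.+1 - k) != 0 by rewrite expf_neq0.
have d0 : (1 - y) ^+ k != 0 by rewrite expf_neq0.
have n0 : (m.+1 - k)%:R != 0 :> F.
  by have /pcharf0P -> := hF; rewrite subn_eq0 -ltnNge ltnS.
field.
by rewrite a0 b0 c0 d0 n0.
Qed.
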